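(* Let $n\geq3$, let $S_n$ act on $V=\mathbb{C}^n$ by its natural permutation representation, and let $\alpha=\sum_{g\in S_n}\alpha_g$ be an element of $(H^{2,1}\oplus H^{2,0})^{S_n}$. If $g$ is neither the identity nor a $3$-cycle, then $\alpha_g=0$.
   Context: $S_n$ acts by $\sigma e_i=e_{\sigma(i)}$. For $g\in S_n$, let $V^g$ be its fixed space, $(V^g)^\perp$ its orthogonal complement with respect to the standard bilinear form, and $c_g=\operatorname{codim}V^g$. Identify $(V^g)^*$ with the functionals on $V$ vanishing on $(V^g)^\perp$, and $((V^g)^* )^\perp$ with the functionals on $V$ vanishing on $V^g$, so $V^*=(V^g)^*\oplus((V^g)^* )^\perp$. Define $H^{2,d}_g=S^d(V^g)\otimes\bigwedge^{2-c_g}(V^g)^*\otimes\bigwedge^{c_g}((V^g)^* )^\perp\otimes\mathbb{C}g$ (zero if $2-c_g<0$), viewed inside $S^d(V)\otimes\bigwedge^2V^*\otimes\mathbb{C}S_n$ (wedge the two exterior factors), and $H^{2,d}=\bigoplus_{g\in S_n}H^{2,d}_g$. $S_n$ acts diagonally: $h\cdot(f\otimes\omega\otimes g)=(h\cdot f)\otimes(h\cdot\omega)\otimes hgh^{-1}$, with the contragredient action on $V^*$; $(\cdot)^{S_n}$ denotes invariants and $\alpha_g$ the component of $\alpha$ in $H^{2,1}_g\oplus H^{2,0}_g$. *)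

(* Defs.v *)
From HB Require Import structures.
From mathcomp Require Import all_boot all_order all_algebra all_fingroup all_field.
Set Implicit Arguments. Unset Strict Implicit. Unset Printing Implicit Defensive.
Import GRing.Theory Num.Theory.
Local Open Scope ring_scope.

(* V = C^n, realised with scalars in algC (algebraic complex numbers).
   Vectors of V and functionals of V^* are both represented by their
   coordinate vectors; a functional f acts by x |-> bform f x. *)
Definition vec n := {ffun 'I_n -> algC}.
(* S^1(V) (x) (/\^2 V^* as alternating bilinear forms) : coordinates T(k,i,j) *)
Definition tensor3 n := {ffun 'I_n * 'I_n * 'I_n -> algC}.
(* S^0(V) (x) /\^2 V^* = /\^2 V^* : coordinates w(i,j) = w(e_i, e_j) *)
Definition tensor2 n := {ffun 'I_n * 'I_n -> algC}.

(* standard bilinear form; also the pairing of V^* with V *)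
Definition bform n (x y : vec n) : algC := \sum_i x i * y i.

(* natural action s e_i = e_(s i); also the contragredient action on V^* *)
Definition act_vec n (s : 'S_n) (v : vec n) : vec n := [ffun j => v ((s^-1)%g j)].
Definition act2 n (s : 'S_n) (w : tensor2 n) : tensor2 n :=
  [ffun ij => w ((s^-1)%g ij.1, (s^-1)%g ij.2)].
Definition act3 n (s : 'S_n) (T : tensor3 n) : tensor3 n :=
  [ffun kij => T ((s^-1)%g kij.1.1, (s^-1)%g kij.1.2, (s^-1)%g kij.2)].

Definition fixsp n (g : 'S_n) (v : vec n) : Prop := act_vec g v = v.
Definition fixsp_perp n (g : 'S_n) (w : vec n) : Prop :=
  forall v, fixsp g v -> bform w v = 0.
(* (V^g)^* : functionals vanishing on (V^g)^perp *)
Definition dual_fix n (g : 'S_n) (f : vec n) : Prop :=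
  forall w, fixsp_perp g w -> bform f w = 0.
(* ((V^g)^* )^perp : functionals vanishing on V^g *)
Definition dual_fix_perp n (g : 'S_n) (f : vec n) : Prop :=
  forall v, fixsp g v -> bform f v = 0.

(* c_g = codim V^g = n - dim V^g, with V^g the (row) kernel of P_g - 1 *)
Definition codim n (g : 'S_n) : nat :=
  (n - \rank (kermx (perm_mx g - 1%:M : 'M[algC]_n)))%N.

Definition wedge n (f h : vec n) : tensor2 n :=
  [ffun ij => f ij.1 * h ij.2 - f ij.2 * h ij.1].
Definition sym_wedge n (v f h : vec n) : tensor3 n :=
  [ffun kij => v kij.1.1 * (f kij.1.2 * h kij.2 - f kij.2 * h kij.1.2)].

(* f /\ h is a generator of /\^(2-c)(V^g)^* /\ /\^c ((V^g)^* )^perp, c = c_g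
   (no generators when c_g > 2, i.e. the space is 0). *)
Definition wedge_factors n (g : 'S_n) (f h : vec n) : Prop :=
  match codim g with
  | 0%N => dual_fix g f /\ dual_fix g h
  | 1%N => dual_fix g f /\ dual_fix_perp g h
  | 2%N => dual_fix_perp g f /\ dual_fix_perp g h
  | _ => False
  end.

(* T lies in H^{2,1}_g (coefficient at g) : span of v (x) (f /\ h),
   v in S^1(V^g) = V^g (scalars absorbed in v) *)
Definition inH21 n (g : 'S_n) (T : tensor3 n) : Prop :=
  exists s : seq (vec n * vec n * vec n),
    (forall t, t \in s -> fixsp g t.1.1 /\ wedge_factors g t.1.2 t.2) /\
    T = \sum_(t <- s) sym_wedge t.1.1 t.1.2 t.2.

(* w lies in H^{2,0}_g (coefficient at g) : S^0(V^g) = C, span of f /\ h *)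
Definition inH20 n (g : 'S_n) (w : tensor2 n) : Prop :=
  exists s : seq (vec n * vec n),
    (forall t, t \in s -> wedge_factors g t.1 t.2) /\
    w = \sum_(t <- s) wedge t.1 t.2.

Definition is_3cycle n (g : 'S_n) : Prop :=
  exists a b c : 'I_n,
    [/\ [&& a != b, b != c & a != c], g a = b, g b = c, g c = a &
        forall x, x \notin [:: a; b; c] -> g x = x].

(* Main.v *)
Require Import Defs.
From HB Require Import structures.
From mathcomp Require Import all_boot all_order all_algebra all_fingroup all_field.
From mathcomp Require Import ring.
Set Implicit Arguments. Unset Strict Implicit. Unset Printing Implicit Defensive.
Import GRing.Theory Num.Theory.
Local Open Scope ring_scope.


Definition Amx n (g : 'S_n) : 'M[algC]_n := perm_mx g - 1%:M.

Lemma AmxE n (g : 'S_n) i j : Amx g i j = (g i == j)%:R - (i == j)%:R.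
Proof. by rewrite /Amx /perm_mx !mxE. Qed.

Lemma codimE n (g : 'S_n) : codim g = \rank (Amx g).
Proof. by rewrite /codim mxrank_ker subKn // rank_leq_row. Qed.

Lemma codim_gt0 n (g : 'S_n) x : g x != x -> (0 < codim g)%N.
Proof.
move=> gx; rewrite codimE lt0n mxrank_eq0; apply/eqP => /matrixP /(_ x x).
by rewrite AmxE (negbTE gx) eqxx !mxE sub0r; apply/eqP; rewrite oppr_eq0 oner_eq0.
Qed.

Lemma codim_gt2 n (g : 'S_n) (x1 x2 x3 : 'I_n) :
  [&& x1 != x2, x1 != x3 & x2 != x3] ->
  g x1 \notin [:: x1; x2; x3] -> g x2 \notin [:: x2; x3] -> g x3 != x3 ->
  (2 < codim g)%N.
Proof.
move=> /and3P[d12 d13 d23] h1 h2 h3.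
pose f (r : 'I_3) : 'I_n := if r == 0 :> nat then x1 else if r == 1 :> nat then x2 else x3.
pose M := colsub f (rowsub f (Amx g)).
have le : (\rank M <= codim g)%N.
  rewrite codimE; apply: leq_trans (mxrankS (rowsub_sub f (Amx g))).
  rewrite -[X in (_ <= X)%N]mxrank_tr -mxrank_tr.
  have -> : M^T = rowsub f (rowsub f (Amx g))^T by apply/matrixP => i j; rewrite !mxE.
  exact/mxrankS/rowsub_sub.
suff e : \rank M = 3%N by rewrite e in le.
apply: mxrank_unit; rewrite unitmxE det_trig.
  rewrite !big_ord_recl big_ord0 /M !mxE /f /=.
  move: h1 h2; rewrite !inE => /norP[n11 /norP[n12 n13]] /norP[n22 n23].
  rewrite !eqxx (negbTE n11) (negbTE n22) (negbTE h3) sub0r mulr1 unitfE.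
  by rewrite !mulf_neq0 // oppr_eq0 oner_eq0.
move: h1 h2; rewrite !inE => /norP[n11 /norP[n12 n13]] /norP[n22 n23].
apply/is_trig_mxP => i j; rewrite /M !mxE /f.
case: i => [[|[|[|?]]] ?] //; case: j => [[|[|[|?]]] ?] //= _.
- by rewrite (negbTE n12) (negbTE d12) subr0.
- by rewrite (negbTE n13) (negbTE d13) subr0.
- by rewrite (negbTE n23) (negbTE d23) subr0.
Qed.



Lemma half0 (y : algC) : y = - y -> y = 0.
Proof.
move=> e; have : y *+ 2 = 0 by rewrite mulr2n {1}e addNr.
by move/eqP; rewrite mulrn_eq0 /= => /eqP.
Qed.

Lemma ffhalf0 (T : finType) (F : {ffun T -> algC}) : F = - F -> F = 0.
Proof.
move=> e; apply/ffunP => x; rewrite ffunE; apply: half0.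
by move/ffunP/(_ x): e; rewrite ffunE.
Qed.

Lemma sum_deltal n (v : vec n) i : \sum_j (j == i)%:R * v j = v i.
Proof.
rewrite (bigD1 i) //= eqxx mul1r big1 ?addr0 // => j /negbTE ->; by rewrite mul0r.
Qed.

Lemma sum_deltar n (v : vec n) i : \sum_j v j * (j == i)%:R = v i.
Proof. by rewrite -(sum_deltal v i); apply: eq_bigr => j _; rewrite mulrC. Qed.

Lemma fixspE n (g : 'S_n) (v : vec n) : fixsp g v -> forall i, v (g i) = v i.
Proof. by move=> e i; move/ffunP/(_ (g i)): e; rewrite ffunE permK => ->. Qed.

Lemma fixspI n (g : 'S_n) (v : vec n) : (forall i, v (g i) = v i) -> fixsp g v.
Proof. by move=> e; apply/ffunP => j; rewrite ffunE -{2}(permKV g j) e. Qed.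

Lemma dual_fixE n (g : 'S_n) (f : vec n) : dual_fix g f -> forall i, f (g i) = f i.
Proof.
move=> df i; pose w : vec n := [ffun j => (j == i)%:R - (j == g i)%:R].
have pw : fixsp_perp g w.
  move=> v /fixspE fv; rewrite /bform.
  under eq_bigr do rewrite ffunE mulrBl.
  by rewrite sumrB !sum_deltal fv subrr.
move: (df w pw); rewrite /bform.
under eq_bigr do rewrite ffunE mulrBr.
by rewrite sumrB !sum_deltar => /eqP; rewrite subr_eq0 => /eqP.
Qed.

Definition invol n (g : 'S_n) := forall x, g (g x) = x.

Lemma invol_inv n (g : 'S_n) : invol g -> forall x, (g^-1)%g x = g x.
Proof. by move=> gi x; rewrite -{1}(gi x) permK. Qed.

Lemma dual_fix_perpE n (g : 'S_n) (h : vec n) : invol g -> dual_fix_perp g h ->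
  forall i, h (g i) = - h i.
Proof.
move=> gi dp i; pose v : vec n := [ffun j => (j == i)%:R + (j == g i)%:R].
have fv : fixsp g v.
  apply: fixspI => j; rewrite !ffunE (inj_eq perm_inj) addrC.
  have -> : (g j == i) = (j == g i) by apply/eqP/eqP => [<-|->]; rewrite gi.
  by [].
move: (dp v fv); rewrite /bform.
under eq_bigr do rewrite ffunE mulrDr.
by rewrite big_split /= !sum_deltar addrC => /eqP; rewrite addr_eq0 => /eqP.
Qed.

Definition anti n (g : 'S_n) (f : vec n) := forall x, f (g x) = - f x.

Lemma anti_wedge0 n (g : 'S_n) (f h : vec n) i j : anti g f -> anti g h ->
  [|| g i == i, g j == j, j == i | j == g i] -> f i * h j - f j * h i = 0.
Proof.
move=> af ah /or4P[/eqP e|/eqP e|/eqP->|/eqP->].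
- have f0 : f i = 0 by apply: half0; rewrite -{1}e af.
  have h0 : h i = 0 by apply: half0; rewrite -{1}e ah.
  by rewrite f0 h0 !mul0r mulr0 subrr.
- have f0 : f j = 0 by apply: half0; rewrite -{1}e af.
  have h0 : h j = 0 by apply: half0; rewrite -{1}e ah.
  by rewrite f0 h0 !mul0r mulr0 subrr.
- by rewrite mulrC subrr.
- rewrite af ah; ring.
Qed.

Lemma act3_sum n (k : 'S_n) (s : seq (vec n * vec n * vec n)) F :
  act3 k (\sum_(t <- s) F t) = \sum_(t <- s) act3 k (F t).
Proof.
elim: s => [|t s IH]; rewrite ?big_nil ?big_cons; apply/ffunP => x; rewrite !ffunE //.
by rewrite -IH ffunE.
Qed.

Lemma act2_sum n (k : 'S_n) (s : seq (vec n * vec n)) F :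
  act2 k (\sum_(t <- s) F t) = \sum_(t <- s) act2 k (F t).
Proof.
elim: s => [|t s IH]; rewrite ?big_nil ?big_cons; apply/ffunP => x; rewrite !ffunE //.
by rewrite -IH ffunE.
Qed.

Lemma kill n (g k : 'S_n) (T : tensor3 n) (w : tensor2 n) :
  (forall f h, wedge_factors g f h -> act2 k (wedge f h) = - wedge f h) ->
  (forall v, fixsp g v -> act_vec k v = v) ->
  inH21 g T -> inH20 g w -> T = act3 k T -> w = act2 k w -> T = 0 /\ w = 0.
Proof.
move=> sw sv [s [Hs ->]] [s' [Hs' ->]] e3 e2; split; apply: ffhalf0.
  rewrite {1}e3 act3_sum -sumrN; apply: eq_big_seq => t /Hs [fv wf].
  apply/ffunP => [[[p i] j]]; rewrite !ffunE /=.
  move/ffunP/(_ p): (sv _ fv); rewrite ffunE => ->.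
  move/ffunP/(_ (i, j)): (sw _ _ wf); rewrite !ffunE /= => ->.
  by rewrite mulrN.
rewrite {1}e2 act2_sum -sumrN; apply: eq_big_seq => t /Hs' wf.
exact: sw.
Qed.



Lemma pair_cond n (g : 'S_n) a b i j : g a = b -> g b = a ->
  i \in [:: a; b] -> j \in [:: a; b] -> (j == i) || (j == g i).
Proof.
move=> ga gb; rewrite !inE => /orP[/eqP->|/eqP->] /orP[/eqP->|/eqP->];
  by rewrite ?ga ?gb ?eqxx ?orbT.
Qed.

Lemma sign1 n (g : 'S_n) (f h : vec n) : invol g -> codim g = 1%N ->
  wedge_factors g f h -> act2 g (wedge f h) = - wedge f h.
Proof.
rewrite /wedge_factors => gi ->[df dp]; apply/ffunP => [[i j]].
rewrite !ffunE /= !invol_inv // !(dual_fixE df) !(dual_fix_perpE gi dp); ring.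
Qed.

Lemma sign2t n (g : 'S_n) (f h : vec n) a b : invol g -> codim g = 2%N ->
  g a = b -> (forall e, e \notin [:: a; b] -> g e = e) ->
  wedge_factors g f h -> act2 g (wedge f h) = - wedge f h.
Proof.
rewrite /wedge_factors => gi -> ga ge [df dh].
have gb : g b = a by rewrite -ga gi.
have af : anti g f := dual_fix_perpE gi df.
have ah : anti g h := dual_fix_perpE gi dh.
have cond i j : [|| g i == i, g j == j, j == i | j == g i].
  case: (boolP (g i == i)) => //= ni; case: (boolP (g j == j)) => //= nj.
  have ii : i \in [:: a; b].
    by case: (boolP (i \in [:: a;b])) => // /ge e; rewrite e eqxx in ni.
  have jj : j \in [:: a; b].
    by case: (boolP (j \in [:: a;b])) => // /ge e; rewrite e eqxx in nj.
  exact: pair_cond ga gb ii jj.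
apply/ffunP => [[i j]]; rewrite !ffunE /= !invol_inv //.
by rewrite (anti_wedge0 af ah (cond i j)) (anti_wedge0 af ah (cond (g i) (g j))) oppr0.
Qed.

Lemma eps n (g : 'S_n) (f : vec n) a b x : anti g f -> g a = b -> g b = a ->
  f (tperm a b x) = if x \in [:: a; b] then - f x else f x.
Proof.
move=> af ga gb; rewrite !inE; case: tpermP => [->|->|na nb].
- by rewrite eqxx /= -ga af.
- by rewrite eqxx orbT -gb af.
- by move/eqP: na => /negbTE ->; move/eqP: nb => /negbTE ->.
Qed.

Lemma sign2d n (g : 'S_n) (f h : vec n) a b c d : invol g -> codim g = 2%N ->
  g a = b -> g c = d -> c \notin [:: a; b] -> d \notin [:: a; b] ->
  (forall e, e \notin [:: a; b; c; d] -> g e = e) ->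
  wedge_factors g f h -> act2 (tperm a b) (wedge f h) = - wedge f h.
Proof.
rewrite /wedge_factors => gi -> ga gc nc nd ge [df dh].
have gb : g b = a by rewrite -ga gi.
have gd : g d = c by rewrite -gc gi.
have af : anti g f := dual_fix_perpE gi df.
have ah : anti g h := dual_fix_perpE gi dh.
have inab i : g i != i -> i \notin [:: a; b] -> i \in [:: c; d].
  move=> ni nab; case: (boolP (i \in [:: c; d])) => // ncd.
  have : i \notin [:: a; b; c; d].
    by move: nab ncd; rewrite !inE; case: (i == a); case: (i == b); case: (i == c); case: (i == d).
  by move/ge => e; rewrite e eqxx in ni.
apply/ffunP => [[i j]]; rewrite !ffunE /= tpermV !(eps _ af ga gb) !(eps _ ah ga gb).
case: ifP => ii; case: ifP => jj.
- have w0 : f i * h j - f j * h i = 0.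
    apply: anti_wedge0 af ah _.
    by rewrite (pair_cond ga gb (idP ii) (idP jj)) !orbT.
  by rewrite !mulrNN w0 oppr0.
- ring.
- ring.
- have w0 : f i * h j - f j * h i = 0.
    apply: anti_wedge0 af ah _.
    case: (boolP (g i == i)) => //= ni; case: (boolP (g j == j)) => //= nj.
    exact: pair_cond gc gd (inab _ ni (negbT ii)) (inab _ nj (negbT jj)).
  by rewrite w0 oppr0.
Qed.

Lemma fix2d n (g : 'S_n) (v : vec n) a b : invol g -> g a = b ->
  fixsp g v -> act_vec (tperm a b) v = v.
Proof.
move=> gi ga /fixspE fv; have gb : g b = a by rewrite -ga gi.
apply/ffunP => x; rewrite ffunE tpermV; case: tpermP => [->|->|//].
- by rewrite -ga fv.
- by rewrite -gb fv.
Qed.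

Lemma conj2d n (g : 'S_n) a b : invol g -> g a = b -> (g ^ tperm a b)%g = g.
Proof.
move=> gi ga; have gb : g b = a by rewrite -ga gi.
apply/permP => x; rewrite conjgE !permM tpermV.
case: (tpermP a b x) => [->|->|na nb].
- by rewrite gb tpermL.
- by rewrite ga tpermR.
- rewrite tpermD //.
  + by apply/eqP => e; apply: nb; rewrite -(gi x) -e ga.
  + by apply/eqP => e; apply: na; rewrite -(gi x) -e gb.
Qed.



Theorem lemma4p3 (n : nat) (hn : (3 <= n)%N)
  (a1 : 'S_n -> tensor3 n) (a0 : 'S_n -> tensor2 n) :
  (forall g, inH21 g (a1 g)) ->
  (forall g, inH20 g (a0 g)) ->
  (forall h g, a1 (g ^ h)%g = act3 h (a1 g) /\ a0 (g ^ h)%g = act2 h (a0 g)) ->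
  forall g : 'S_n, g != 1%g -> ~ is_3cycle g -> a1 g = 0%R /\ a0 g = 0%R.
Proof.
move=> H21 H20 Hc g g1 n3.
have Hg k : (g ^ k)%g = g -> a1 g = act3 k (a1 g) /\ a0 g = act2 k (a0 g).
  by move=> e; have [e1 e2] := Hc k g; rewrite e in e1 e2.
have killg : (forall f h, wedge_factors g f h -> act2 g (wedge f h) = - wedge f h) ->
    a1 g = 0 /\ a0 g = 0.
  move=> sw; have gg : (g ^ g)%g = g by rewrite conjgE mulKg.
  have [e1 e2] := Hg g gg.
  exact: kill sw (fun v fv => fv) (H21 g) (H20 g) e1 e2.
have big : (2 < codim g)%N -> a1 g = 0 /\ a0 g = 0.
  move=> c; apply: killg => f h; move: c; rewrite /wedge_factors.
  by case: (codim g) => [|[|[|?]]].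
have ginj := @perm_inj _ g.
case: (boolP [exists x, g (g x) != x]) => [/existsP[x gx] | ].
  have [y ey] : {y | g x = y} by exists (g x).
  have [z ez] : {z | g y = z} by exists (g y).
  rewrite ey ez in gx.
  have yx : y != x.
    apply: contraNneq gx => e; by rewrite -ez e ey e.
  have zy : z != y by apply: contraNneq yx => e; apply/eqP/ginj; rewrite ez ey.
  apply: big.
  case: (boolP (g z == x)) => gz.
    case: (pickP (fun w => (w \notin [:: x; y; z]) && (g w != w))) => [w /andP[nw gw] | none].
      move: nw; rewrite !inE => /norP[wx /norP[wy wz]].
      apply: (codim_gt2 (x1:=w) (x2:=y) (x3:=x)) => //.
      - by rewrite wy wx yx.
      - rewrite !inE (negbTE gw) -ey (inj_eq ginj) (negbTE wx) /=.
        by rewrite -(eqP gz) (inj_eq ginj).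
      - by rewrite ez !inE (negbTE zy) (negbTE gx).
      - by rewrite ey.
    exfalso; apply: n3; exists x, y, z; split => //.
    - by rewrite eq_sym yx eq_sym zy eq_sym gx.
    - exact/eqP.
    - by move=> w nw; move: (none w); rewrite nw /= => /negbFE/eqP.
  apply: (codim_gt2 (x1:=z) (x2:=y) (x3:=x)) => //.
  - by rewrite zy gx yx.
  - rewrite !inE (negbTE gz) -ey (inj_eq ginj) (negbTE gx) /= orbF.
    by rewrite -ez (inj_eq ginj) ez.
  - by rewrite ez !inE (negbTE zy) (negbTE gx).
  - by rewrite ey.
rewrite negb_exists => /forallP gi'.
have gi : invol g by move=> x; apply/eqP; move: (gi' x); rewrite negbK.
have [a ga] : exists a, g a != a.
  case: (pickP (fun a => g a != a)) => [a ga|none]; first by exists a.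
  exfalso; move/negP: g1; apply; apply/eqP/permP => x; rewrite perm1.
  by apply/eqP; move: (none x) => /negbFE.
have [b eb] : {b | g a = b} by exists (g a).
rewrite eb in ga.
case C: (codim g) => [|[|[|cc]]].
- by have := codim_gt0 (g:=g) (x:=a); rewrite C eb => /(_ ga).
- by apply: killg => f h; exact: sign1 gi C.
- case: (pickP (fun c => (c \notin [:: a; b]) && (g c != c))) => [c /andP[nc gc] | none].
    have [d ed] : {d | g c = d} by exists (g c).
    rewrite ed in gc.
    have nd : d \notin [:: a; b].
      rewrite !inE; apply/norP; split.
        apply: contraNneq nc => e; rewrite -(gi c) ed e eb !inE eqxx orbT //.
      apply: contraNneq nc => e; rewrite -eb -ed in e; rewrite (ginj _ _ e) !inE eqxx //.
    case: (pickP (fun e => (e \notin [:: a; b; c; d]) && (g e != e))) => [e /andP[ne ge]| none].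
      suff : (2 < codim g)%N by rewrite C.
      move: nc nd ne; rewrite !inE => /norP[ca cb] /norP[da db] /norP[ea /norP[eb' /norP[ec ed']]].
      have sy (u v : 'I_n) : u != v -> (u == v) = false /\ (v == u) = false.
        by move=> h; rewrite (negbTE h) eq_sym (negbTE h).
      have [ca1 ca2] := sy _ _ ca; have [cb1 cb2] := sy _ _ cb.
      have [da1 da2] := sy _ _ da; have [db1 db2] := sy _ _ db.
      have [ea1 ea2] := sy _ _ ea; have [eb1 eb2] := sy _ _ eb'.
      have [ec1 ec2] := sy _ _ ec; have [ed1 ed2] := sy _ _ ed'.
      have [dc1 dc2] := sy _ _ gc; have [ba1 ba2] := sy _ _ ga.
      apply: (codim_gt2 (x1:=a) (x2:=c) (x3:=e)); rewrite ?eb ?ed ?inE;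
        by rewrite ?ca1 ?ca2 ?cb1 ?cb2 ?da1 ?da2 ?db1 ?db2 ?ea1 ?ea2 ?eb1 ?eb2 ?ec1 ?ec2 ?ed1 ?ed2 ?dc1 ?dc2 ?ba1 ?ba2.
    have ge' : forall e, e \notin [:: a; b; c; d] -> g e = e.
      by move=> e ne; move: (none e); rewrite ne /= => /negbFE/eqP.
    have [e1 e2] := Hg _ (conj2d gi eb).
    exact: kill (fun f h => sign2d gi C eb ed nc nd ge') (fun v => fix2d gi eb) (H21 g) (H20 g) e1 e2.
  apply: killg => f h; apply: sign2t gi C eb _.
  by move=> e ne; move: (none e); rewrite ne /= => /negbFE/eqP.
- by apply: big; rewrite C.
Qed.
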